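(* Let $\mathfrak s_{nc}$ be a real semisimple Lie algebra without compact ideals, with Cartan involution $\Theta$, maximal abelian subspace $\mathfrak a$ of the $(-1)$-eigenspace of $\Theta$, restricted root space decomposition $\mathfrak s_{nc}=\mathfrak s_-\oplus\mathfrak a\oplus\mathfrak m\oplus\mathfrak s_+$ (where $\mathfrak m$ is the centralizer of $\mathfrak a$ in the fixed-point set of $\Theta$, $\mathfrak s_+$ the sum of positive root spaces and $\mathfrak s_-$ the sum of negative root spaces, for some choice of positivity). Let $\pi:\mathfrak s_{nc}\to\mathfrak{gl}(V)$ be a finite-dimensional real linear representation. Then the linear span of $\{\pi(X)v : X\in\mathfrak s_{nc},\ v\in V\}$ equals the linear span of $\{\pi(X)v : X\in\mathfrak a\oplus\mathfrak m\oplus\mathfrak s_+,\ v\in V\}$. *)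

(* Defs.v *)
(* A finite-dimensional real Lie algebra is modelled as
   'rV[R]_n equipped with a bracket; subspaces are predicates closed under
   linear combinations; a representation acts on column vectors 'cV[R]_m. *)
From mathcomp Require Import all_boot all_order all_algebra.
From mathcomp Require Import reals.
Set Implicit Arguments. Unset Strict Implicit. Unset Printing Implicit Defensive.
Import GRing.Theory Num.Theory.
Local Open Scope ring_scope.

Section LieDefs.
Variable R : realType.

Definition lspan (V : lmodType R) (S : V -> Prop) : V -> Prop :=
  fun u => exists k (c : 'I_k -> R) (w : 'I_k -> V),
    (forall i, S (w i)) /\ u = \sum_(i < k) c i *: w i.

Definition subspace (V : lmodType R) (S : V -> Prop) : Prop :=
  S 0 /\ forall (a : R) x y, S x -> S y -> S (a *: x + y).

Variable n : nat.
Notation L := 'rV[R]_n.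

Definition is_lie_bracket (br : L -> L -> L) : Prop :=
  [/\ forall (a : R) x y z, br (a *: x + y) z = a *: br x z + br y z,
      forall (a : R) x y z, br z (a *: x + y) = a *: br z x + br z y,
      forall x, br x x = 0 &
      forall x y z, br x (br y z) + br y (br z x) + br z (br x y) = 0].

(* matrix of ad x acting on row vectors: v *m ad_mx br x = br x v *)
Definition ad_mx (br : L -> L -> L) (x : L) : 'M[R]_n :=
  \matrix_(i, j) (br x (delta_mx 0 i)) 0 j.

Definition killing (br : L -> L -> L) (x y : L) : R :=
  \tr (ad_mx br x *m ad_mx br y).

Definition ideal (br : L -> L -> L) (I : L -> Prop) : Prop :=
  subspace I /\ forall x y, I y -> I (br x y).

(* I is solvable: some chain I = C_0, C_1, ..., C_k = 0 of subspaces with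
   [C_j, C_j] contained in C_(j+1) (equivalently, the derived series of I
   reaches 0). *)
Definition solvable_sub (br : L -> L -> L) (I : L -> Prop) : Prop :=
  exists k (C : nat -> L -> Prop),
    [/\ forall j, subspace (C j),
        forall x, C 0%N x <-> I x,
        forall j x y, C j x -> C j y -> C j.+1 (br x y) &
        forall x, C k x -> x = 0].

Definition semisimple (br : L -> L -> L) : Prop :=
  forall I, ideal br I -> solvable_sub br I -> forall x, I x -> x = 0.

Definition bform (Q : 'M[R]_n) (x y : L) : R := (x *m Q *m y^T) 0 0.

Definition compact_ideal (br : L -> L -> L) (I : L -> Prop) : Prop :=
  ideal br I /\ (exists x, I x /\ x != 0) /\
  exists Q : 'M[R]_n,
    [/\ forall x y, I x -> I y -> bform Q x y = bform Q y x,
        forall x, I x -> x != 0 -> 0 < bform Q x x &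
        forall z x y, I z -> I x -> I y ->
          bform Q (br z x) y + bform Q x (br z y) = 0].

Definition no_compact_ideals (br : L -> L -> L) : Prop :=
  forall I, ~ compact_ideal br I.

Definition cartan_involution (br : L -> L -> L) (Th : 'M[R]_n) : Prop :=
  [/\ Th *m Th = 1%:M,
      forall x y, br (x *m Th) (y *m Th) = br x y *m Th &
      forall x, x != 0 -> 0 < - killing br x (x *m Th)].

Definition pspace (Th : 'M[R]_n) (x : L) : Prop := x *m Th = - x.

Definition abelian_sub (br : L -> L -> L) (A : L -> Prop) : Prop :=
  forall x y, A x -> A y -> br x y = 0.

Definition max_abelian_in_p (br : L -> L -> L) (Th : 'M[R]_n)
    (A : L -> Prop) : Prop :=
  [/\ subspace A, forall x, A x -> pspace Th x, abelian_sub br A &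
      forall A', subspace A' -> (forall x, A' x -> pspace Th x) ->
        abelian_sub br A' -> (forall x, A x -> A' x) -> forall x, A' x -> A x].

Definition mspace (br : L -> L -> L) (Th : 'M[R]_n) (A : L -> Prop) (x : L)
  : Prop := x *m Th = x /\ forall h, A h -> br h x = 0.

(* a linear functional on L, lam(h) = (h *m lam) 0 0; only its restriction
   to a matters *)
Definition fval (lam : 'cV[R]_n) (h : L) : R := (h *m lam) 0 0.

Definition root_vec (br : L -> L -> L) (A : L -> Prop) (lam : 'cV[R]_n)
  (x : L) : Prop := forall h, A h -> br h x = fval lam h *: x.

Definition is_root (br : L -> L -> L) (A : L -> Prop) (lam : 'cV[R]_n)
  : Prop := (exists h, A h /\ fval lam h != 0) /\
            (exists x, x != 0 /\ root_vec br A lam x).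

(* positivity chosen by a regular element H0 of a *)
Definition regular_elt (br : L -> L -> L) (A : L -> Prop) (H0 : L) : Prop :=
  A H0 /\ forall lam, is_root br A lam -> fval lam H0 != 0.

Definition s_plus (br : L -> L -> L) (A : L -> Prop) (H0 : L) : L -> Prop :=
  lspan (fun x => exists lam, [/\ is_root br A lam, 0 < fval lam H0 &
                                   root_vec br A lam x]).

Definition ams_plus (br : L -> L -> L) (Th : 'M[R]_n) (A : L -> Prop)
  (H0 : L) (x : L) : Prop :=
  exists h y z, [/\ A h, mspace br Th A y, s_plus br A H0 z & x = h + y + z].

Definition is_lie_rep (m : nat) (br : L -> L -> L) (pi : L -> 'M[R]_m)
  : Prop :=
  (forall (a : R) x y, pi (a *: x + y) = a *: pi x + pi y) /\
  (forall x y, pi (br x y) = pi x *m pi y - pi y *m pi x).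

End LieDefs.

(* Main.v *)
Require Import Defs.
From mathcomp Require Import all_boot all_order all_algebra.
From mathcomp Require Import reals.
From mathcomp Require Import complex.
From mathcomp Require Import ring lra zify.
From Stdlib Require Import Classical.
Set Implicit Arguments. Unset Strict Implicit. Unset Printing Implicit Defensive.
Import Order.TTheory GRing.Theory Num.Theory.
Local Open Scope ring_scope.

Unset Implicit Arguments.
Section Cpx.
Variable R : rcfType.
Lemma real_factor (d : {poly R}) : size d != 1%N ->
  (exists a, root d a) \/
  (exists a b, b != 0 /\ (('X - a%:P)^+2 + (b^+2)%:P) %| d).
Proof.
move=> sd.
pose f := real_complex R.
pose dC := map_poly f d.
have sdC : size dC != 1%N by rewrite size_map_poly.
have [z rz] := closed_rootP dC sdC.
case: z rz => a b rz.
have [b0|b0] := eqVneq b 0.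
  left; exists a; rewrite -(fmorph_root f) /f /=.
  by move: rz; rewrite b0.
right; exists a, b; split => //.
have conjd : map_poly conjc dC = dC.
  rewrite /dC -map_poly_comp; apply: eq_map_poly => x /=.
  by rewrite /f /= oppr0.
have rz' : root dC (a +i* b)^*%C by rewrite -complex_root_conj conjd.
have allr : all (root dC) [:: (a +i* b)%C; (a +i* b)^*%C] by rewrite /= rz rz'.
have ur : uniq_roots [:: (a +i* b)%C; (a +i* b)^*%C].
  rewrite uniq_rootsE /= inE andbT; apply/eqP; case => /eqP.
  apply/negP; rewrite -subr_eq0 opprK -mulr2n mulrn_eq0 negb_or b0 //.
have [q dq] := uniq_roots_prod_XsubC allr ur.
rewrite -(dvdp_map f) -/dC dq; apply: dvdp_mull.
rewrite big_cons big_cons big_nil mulr1.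
have E : (a +i* b)%C = a%:C%C + 'i%C * b%:C%C by rewrite [LHS]complexE.
have E' : ((a +i* b)^*)%C = a%:C%C - 'i%C * b%:C%C.
  by rewrite /= [LHS]complexE /= rmorphN mulrN.
rewrite E' E rmorphD rmorphXn rmorphB /= map_polyX !map_polyC /=.
have I2 : ('i%C)%:P ^+ 2 = - 1 :> {poly R[i]} by rewrite expr2 -polyCM -expr2 sqr_i polyCN.
rewrite polyCD polyCB !polyCM.
set A := (_%:C%C)%:P; set I := ('i%C)%:P; set Bq := (b%:C%C)%:P.
rewrite rmorphXn /= expr2 polyCM -/Bq -expr2.
have -> : ('X - (A + I * Bq)) * ('X - (A - I * Bq)) = ('X - A)^+2 - I^+2 * Bq^+2 by ring.
by rewrite I2 mulN1r opprK.
Qed.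
End Cpx.
Section Spec.
Variable R : rcfType.
Variable n : nat.
Variable T : 'M[R]_n.+1.
Variable Bf : 'rV[R]_n.+1 -> 'rV[R]_n.+1 -> R.
Hypothesis Bl : forall a x y z, Bf (a *: x + y) z = a * Bf x z + Bf y z.
Hypothesis Bs : forall x y, Bf x y = Bf y x.
Hypothesis Bp : forall x, x != 0 -> 0 < Bf x x.
Hypothesis BT : forall x y, Bf (x *m T) y = Bf x (y *m T).

Lemma B0l z : Bf 0 z = 0.
Proof. by have := Bl 1 0 0 z; rewrite scaler0 addr0 mul1r => H; lra. Qed.
Lemma BDl x y z : Bf (x + y) z = Bf x z + Bf y z.
Proof. by rewrite -[x]scale1r Bl mul1r scale1r. Qed.
Lemma BZl a x z : Bf (a *: x) z = a * Bf x z.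
Proof. by rewrite -[a *: x]addr0 Bl B0l addr0. Qed.
Lemma Bge0 x : 0 <= Bf x x.
Proof. by have [->|/Bp/ltW//] := eqVneq x 0; rewrite B0l. Qed.
Lemma BNl x z : Bf (- x) z = - Bf x z.
Proof. by rewrite -scaleN1r BZl mulN1r. Qed.
Lemma BBl x y z : Bf (x - y) z = Bf x z - Bf y z.
Proof. by rewrite BDl BNl. Qed.
Lemma BN a x y : Bf (x *m (T - a%:M)) y = Bf x (y *m (T - a%:M)).
Proof.
rewrite !mulmxBr !mul_mx_scalar BBl BZl BT [RHS]Bs BBl BZl.
by congr (_ - _ * _); apply: Bs.
Qed.

Let p := mxminpoly T.
Lemma p_neq0 : p != 0.
Proof. by rewrite monic_neq0 ?mxminpoly_monic. Qed.

Lemma nz_mx (M : 'M[R]_n.+1) : M != 0 -> exists v : 'rV_n.+1, v *m M != 0.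
Proof.
move=> M0; have [i Hi|H] := pickP (fun i : 'I_n.+1 => row i M != 0).
  by exists (delta_mx 0 i); rewrite -rowE.
case/negP: M0; apply/eqP/row_matrixP => i; rewrite row0; exact/eqP/negbFE/H.
Qed.

Lemma small_nz (s : {poly R}) : s != 0 -> (size s < size p)%N ->
  exists v : 'rV_n.+1, v *m horner_mx T s != 0.
Proof.
move=> s0 ssp; apply: nz_mx; apply/eqP => /mxminpoly_min /dvdp_leq.
by rewrite s0 leqNgt ssp => /(_ isT).
Qed.

Lemma hornerQ a b : horner_mx T (('X - a%:P)^+2 + (b^+2)%:P) =
   (T - a%:M) *m (T - a%:M) + (b^+2)%:M.
Proof.
by rewrite rmorphD rmorphXn rmorphB /= horner_mx_X !horner_mx_C expr2.
Qed.

Lemma S1 a b : b != 0 -> ~~ ((('X - a%:P)^+2 + (b^+2)%:P) %| p).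
Proof.
move=> b0; apply/negP => dQ.
set Q := _ + _ in dQ.
have sQ : size Q = 3%N.
  by rewrite /Q size_polyDl size_exp_XsubC // (leq_ltn_trans (size_polyC_leq1 _)).
have Q0 : Q != 0 by rewrite -size_poly_eq0 sQ.
have pE := divpK dQ.
set s := p %/ Q in pE.
have s0 : s != 0 by apply/eqP=> s0'; move: p_neq0; rewrite -pE s0' mul0r eqxx.
have ssp : (size s < size p)%N.
  by rewrite -pE size_mul // sQ addnS /= addn2 ltnS leqnSn.
have [v Hv] := @small_nz s s0 ssp.
set w := v *m horner_mx T s in Hv.
have wQ : w *m horner_mx T Q = 0.
  have hp : horner_mx T s *m horner_mx T Q = 0.
    by rewrite -(mx_root_minpoly T) -/p -pE rmorphM.
  by rewrite /w -mulmxA hp mulmx0.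
move: wQ; rewrite hornerQ mulmxDr mul_mx_scalar mulmxA => E.
have h1 := Bp _ Hv; have h2 := Bge0 (w *m (T - a%:M)).
have : Bf (w *m (T - a%:M) *m (T - a%:M) + b ^+ 2 *: w) w = 0 by rewrite E B0l.
rewrite BDl BZl BN => h3.
have h4 : 0 < b ^+ 2 by rewrite exprn_even_gt0.
by have := mulr_gt0 h4 h1; lra.
Qed.

Lemma S2 a : ~~ ((('X - a%:P)^+2) %| p).
Proof.
apply/negP => dQ.
have pE := divpK dQ.
set s := p %/ _ in pE.
have s0 : s != 0 by apply/eqP=> s0'; move: p_neq0; rewrite -pE s0' mul0r eqxx.
set s' := s * ('X - a%:P).
have pE' : s' * ('X - a%:P) = p by rewrite -pE /s' expr2 mulrA.
have s'0 : s' != 0 by rewrite mulf_neq0 ?polyXsubC_eq0.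
have ssp : (size s' < size p)%N.
  by rewrite -pE' (size_mul s'0) ?polyXsubC_eq0 // size_XsubC addn2 /=.
have [v Hv] := @small_nz s' s'0 ssp.
set u := v *m horner_mx T s' in Hv.
have uE : u = v *m horner_mx T s *m (T - a%:M).
  by rewrite /u /s' rmorphM /= rmorphB /= horner_mx_X horner_mx_C mulmxA.
have uN : u *m (T - a%:M) = 0.
  have hp : horner_mx T s' *m (T - a%:M) = 0.
    have -> : T - a%:M = horner_mx T ('X - a%:P) by rewrite rmorphB /= horner_mx_X horner_mx_C.
    by rewrite -(mx_root_minpoly T) -/p -pE' [in RHS]rmorphM.
  by rewrite /u -mulmxA hp mulmx0.
have := Bp _ Hv; rewrite {1}uE BN uN Bs B0l.
by rewrite ltxx.
Qed.

Lemma fact_p k (d : {poly R}) : (size d <= k)%N -> d %| p ->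
  exists2 rs, uniq rs & d %= \prod_(r <- rs) ('X - r%:P).
Proof.
elim: k d => [|k IH] d sd dd.
  have d0 : d = 0 by apply/eqP; rewrite -size_poly_eq0 -leqn0.
  by move: dd; rewrite d0 dvd0p (negPf p_neq0).
have [s1|s1] := eqVneq (size d) 1%N.
  by exists [::] => //; rewrite big_nil -size_poly_eq1 s1.
case: (@real_factor R d s1) => [[a ra]|[a [b [b0 dQ]]]]; last first.
  by case/negP: (S1 a b b0); apply: dvdp_trans dQ dd.
have dXa : ('X - a%:P) %| d by rewrite -root_factor_theorem.
have dE := divpK dXa; set d1 := d %/ _ in dE.
have d0 : d != 0 by apply/eqP => d0; move: dd; rewrite d0 dvd0p (negPf p_neq0).
have d10 : d1 != 0 by apply/eqP=> e; move: d0; rewrite -dE e mul0r eqxx.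
have sd1 : (size d1 <= k)%N.
  have e : size d = (size d1).+1.
    by rewrite -dE (size_mul d10) ?polyXsubC_eq0 // size_XsubC addn2.
  by move: sd; rewrite e ltnS.
have d1p : d1 %| p by apply: dvdp_trans dd; rewrite -dE dvdp_mulIl.
have [rs urs Hrs] := IH d1 sd1 d1p.
have aNrs : a \notin rs.
  apply/negP => ars.
  case/negP: (S2 a); apply: dvdp_trans dd.
  rewrite -dE expr2 dvdp_mul2r ?polyXsubC_eq0 //.
  by rewrite (eqp_dvdr _ Hrs) -root_factor_theorem root_prod_XsubC.
exists (a :: rs); first by rewrite /= aNrs urs.
by rewrite big_cons -dE mulrC; apply: eqp_mull.
Qed.

Lemma sym_diag : diagonalizable T.
Proof.
apply/diagonalizableP.
have [rs urs H] := @fact_p (size p) p (leqnn _) (dvdpp p).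
by exists rs => //; rewrite (eqp_dvdl _ H) dvdpp.
Qed.

End Spec.
Section Nil.
Variable R : realType.
Variable m : nat.
Variables F H : 'M[R]_m.+1.
Variable c : R.
Hypothesis c0 : c != 0.
Hypothesis HF : H * F - F * H = c *: F.

Lemma hornerF_comm q : horner_mx F q * F = F * horner_mx F q.
Proof.
have e1 : horner_mx F (q * 'X) = horner_mx F q * F by rewrite rmorphM /= horner_mx_X.
have e2 : horner_mx F ('X * q) = F * horner_mx F q by rewrite rmorphM /= horner_mx_X.
by rewrite -e1 -e2 mulrC.
Qed.

Lemma Dhorner q : H * horner_mx F q - horner_mx F q * H =
   c *: (F * horner_mx F q^`()).
Proof.
elim/poly_ind: q => [|q a IH].
  by rewrite rmorph0 deriv0 rmorph0 mulr0 mul0r subrr mulr0 scaler0.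
rewrite derivMXaddC rmorphD rmorphM /= horner_mx_X horner_mx_C rmorphD rmorphM /=.
rewrite horner_mx_X.
have Ha : H * a%:M = a%:M * H by rewrite -!mulmxE scalar_mxC.
rewrite mulrDr mulrDl Ha opprD addrACA subrr addr0.
have -> : H * (horner_mx F q * F) - horner_mx F q * F * H =
   (H * horner_mx F q - horner_mx F q * H) * F + horner_mx F q * (H * F - F * H).
  by rewrite mulrBl mulrBr !mulrA addrA subrK.
rewrite IH HF mulrDr -scalerAl -scalerAr -scalerDr; congr (_ *: _).
by rewrite -mulrA [horner_mx F q^`() * F]hornerF_comm [horner_mx F q * F]hornerF_comm addrC.
Qed.

Lemma nilF : exists N, F ^+ N = 0.
Proof.
pose p := mxminpoly F.
pose d := (size p).-1.
have p0 : p != 0 by rewrite monic_neq0 ?mxminpoly_monic.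
have sp : size p = d.+1 by rewrite /d prednK // lt0n size_poly_eq0.
have h1 : horner_mx F ('X * p^`()) = 0.
  have := Dhorner p; rewrite mx_root_minpoly mulr0 mul0r subrr => /esym/eqP.
  rewrite scaler_eq0 (negPf c0) /= => /eqP.
  by rewrite rmorphM /= horner_mx_X.
pose r := 'X * p^`() - d%:R *: p.
have hr : horner_mx F r = 0.
  by rewrite /r rmorphB /= h1 linearZ /= mx_root_minpoly scaler0 subrr.
have coefr i : r`_i = (i%:R - d%:R) * p`_i.
  rewrite /r coefB coefZ coefXM coef_deriv mulrBl.
  case: i => [|i] /=; first by rewrite mul0r sub0r.
  congr (_ - _); rewrite mulr_natl; reflexivity.
have sr : (size r <= d)%N.
  apply/leq_sizeP => j dj.
  rewrite coefr; have [->|ne] := eqVneq j d; first by rewrite subrr mul0r.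
  have /leq_sizeP -> // : (size p <= j)%N by rewrite sp ltn_neqAle eq_sym ne dj.
  by rewrite mulr0.
have r0 : r = 0.
  apply/eqP; apply: contraT => rn0.
  have := dvdp_leq rn0 (mxminpoly_min hr).
  by rewrite -/p sp ltnNge sr.
have pE : p = 'X^d.
  apply/polyP => i; rewrite coefXn.
  have := coefr i; rewrite r0 coef0 => /esym/eqP; rewrite mulf_eq0 subr_eq0 eqr_nat.
  have [->|ne] := eqVneq i d.
    move=> _; have := mxminpoly_monic F; rewrite monicE /lead_coef -/p sp /= => /eqP ->.
    by [].
  by move=> /= /eqP.
exists d; have := mx_root_minpoly F; rewrite -/p pE rmorphXn /= horner_mx_X.
by [].
Qed.
End Nil.
Section SL2.
Variable R : realType.
Variable m : nat.
Variables E F H : 'M[R]_m.+1.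
Variable c : R.
Hypothesis c0 : c != 0.
Hypothesis EF : E * F - F * E = H.
Hypothesis HF : H * F - F * H = c *: F.
Variable W : 'cV[R]_m.+1 -> Prop.
Hypothesis W0 : W 0.
Hypothesis Wlin : forall a x y, W x -> W y -> W (a *: x + y).
Hypothesis WE : forall u, W (E *m u).
Hypothesis WH : forall u, W (H *m u).
Hypothesis Fnil : exists N, F ^+ N = 0.

Lemma WD x y : W x -> W y -> W (x + y).
Proof. by move=> wx wy; rewrite -[x]scale1r; apply: Wlin. Qed.
Lemma WZ a x : W x -> W (a *: x).
Proof. by move=> wx; rewrite -[_ *: _]addr0; apply: Wlin. Qed.
Lemma WB x y : W x -> W y -> W (x - y).
Proof. by move=> wx wy; apply: WD => //; rewrite -scaleN1r; apply: WZ. Qed.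

Lemma HF' : H * F = F * H + c *: F.
Proof. by rewrite -HF addrC subrK. Qed.

Lemma I1 k : H * F ^+ k = F ^+ k * H + (k%:R * c) *: F ^+ k.
Proof.
elim: k => [|k IH]; first by rewrite !expr0 mulr1 mul1r mul0r scale0r addr0.
rewrite !exprSr mulrA IH mulrDl -mulrA HF' mulrDr !mulrA -scalerAr -scalerAl.
rewrite -addrA -scalerDl; congr (_ + _ *: _).
by rewrite -[k.+1]addn1 natrD mulrDl mul1r addrC.
Qed.

Definition tt (k : nat) : R := (k * k.+1)%:R / 2.

Lemma ttS k : tt k.+1 = tt k + k.+1%:R.
Proof.
rewrite /tt -[k.+2]addn1 -[k.+1]addn1 !natrM !natrD; by field.
Qed.

Lemma I2 k : E * F ^+ k.+1 - F ^+ k.+1 * E = k.+1%:R *: (F ^+ k * H) + (c * tt k) *: F ^+ k.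
Proof.
elim: k => [|k IH].
  by rewrite expr1 EF expr0 mul1r /tt mul0n mul0r mulr0 scale0r addr0 scale1r.
have -> : E * F ^+ k.+2 - F ^+ k.+2 * E =
   (E * F ^+ k.+1 - F ^+ k.+1 * E) * F + F ^+ k.+1 * (E * F - F * E).
  by rewrite [in RHS]mulrBl [in RHS]mulrBr ![in RHS]mulrA addrA subrK (exprSr F k.+1) !mulrA.
rewrite IH EF mulrDl -!scalerAl -mulrA HF' mulrDr -scalerAr -(exprSr F k).
rewrite mulrA -(exprSr F k) scalerDr scalerA ttS.
set A := F ^+ k.+1 * H; set B := F ^+ k.+1.
rewrite -[k.+2]addn1 natrD scalerDl scale1r mulrDr scalerDl (mulrC c).
rewrite -!addrA; congr (_ + _); rewrite (mulrC c).
by rewrite addrC [_ + A]addrC -addrA.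
Qed.

Lemma key k : (0 < k)%N -> (forall u, W (F ^+ k.+1 *m u)) -> forall u, W (F ^+ k *m u).
Proof.
move=> k0 IH u.
pose g := c * tt k - k.+1%:R * (k%:R * c).
have gE : g = - (c * tt k).
  by rewrite /g /tt natrM; field.
have g0 : g != 0.
  rewrite gE oppr_eq0 mulf_neq0 // /tt mulf_neq0 ?invr_eq0 ?pnatr_eq0 //.
  by rewrite muln_eq0 negb_or -lt0n k0.
have X : (E * F ^+ k.+1 - F ^+ k.+1 * E - k.+1%:R *: (H * F ^+ k)) = g *: F ^+ k.
  by rewrite I2 I1 scalerDr scalerA opprD addrA [_ *: (F ^+ k * H) + _]addrC addrK -scalerBl.
have WX : W ((E * F ^+ k.+1 - F ^+ k.+1 * E - k.+1%:R *: (H * F ^+ k)) *m u).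
  rewrite !mulmxBl -!mulmxE !scalemxAl -!mulmxA.
  apply: WB; first by apply: WB.
  by rewrite -scalemxAl; apply: WZ.
have -> : F ^+ k *m u = g^-1 *: ((E * F ^+ k.+1 - F ^+ k.+1 * E - k.+1%:R *: (H * F ^+ k)) *m u).
  by rewrite X -scalemxAl scalerA mulVf // scale1r.
exact: WZ.
Qed.

Lemma sl2_main u : W (F *m u).
Proof.
have [N FN] := Fnil.
have P : forall d k, (N - k <= d)%N -> (0 < k)%N -> forall u, W (F ^+ k *m u).
  elim=> [|d IHd] k dk k0 v.
    have -> : F ^+ k = 0.
      by rewrite -(subnK (_ : (N <= k)%N)) ?exprD ?FN ?mulr0 // -subn_eq0 -leqn0.
    by rewrite mul0mx.
  have [dk'|dk'] := leqP (N - k) d; first exact: IHd.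
  apply: key => // w; apply: IHd => //; lia.
by rewrite -(expr1 F); apply: (P N 1%N) => //; rewrite subn1 leq_pred.
Qed.
End SL2.
Set Implicit Arguments.
Lemma sym_diag_gen (R : rcfType) n (T : 'M[R]_n) (Bf : 'rV[R]_n -> 'rV[R]_n -> R) :
 (forall a x y z, Bf (a *: x + y) z = a * Bf x z + Bf y z) ->
 (forall x y, Bf x y = Bf y x) -> (forall x, x != 0 -> 0 < Bf x x) ->
 (forall x y, Bf (x *m T) y = Bf x (y *m T)) -> diagonalizable T.
Proof.
case: n T Bf => [|n] T Bf Bl Bs Bp BT.
  exists 1%:M; first exact: unitmx1.
  by apply/is_diag_mxP => -[].
exact: (@sym_diag _ _ _ _ Bl Bs Bp BT).
Qed.

Lemma sl2_gen (R : realType) m (E F H : 'M[R]_m) (c : R) (W : 'cV[R]_m -> Prop) :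
  c != 0 -> E *m F - F *m E = H -> H *m F - F *m H = c *: F -> W 0 ->
  (forall a x y, W x -> W y -> W (a *: x + y)) ->
  (forall u, W (E *m u)) -> (forall u, W (H *m u)) -> forall u, W (F *m u).
Proof.
case: m E F H W => [|m] E F H W c0 EF HF W0 Wl WE WH u.
  by rewrite [F *m u]flatmx0.
have Fn := @nilF R m F H c c0 HF.
exact: (@sl2_main R m E F H c c0 EF HF W W0 Wl WE WH Fn u).
Qed.
Section Span.
Variable R : realType.
Variable V : lmodType R.

Lemma lspan0 (S : V -> Prop) : lspan S 0.
Proof. by exists 0%N, (fun=> 0), (fun=> 0); split => [[]//|]; rewrite big_ord0. Qed.

Lemma lspan_in (S : V -> Prop) x : S x -> lspan S x.
Proof.
move=> Sx; exists 1%N, (fun=> 1), (fun=> x); split => // .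
by rewrite big_ord1 scale1r.
Qed.

Lemma lspan_lin (S : V -> Prop) a x y : lspan S x -> lspan S y -> lspan S (a *: x + y).
Proof.
move=> [k1 [c1 [w1 [S1 ->]]]] [k2 [c2 [w2 [S2 ->]]]].
exists (k1 + k2)%N, (fun i => match split i with inl i1 => a * c1 i1 | inr i2 => c2 i2 end),
  (fun i => match split i with inl i1 => w1 i1 | inr i2 => w2 i2 end).
split.
  by move=> i; case: (split i).
rewrite big_split_ord /= scaler_sumr; congr (_ + _); apply: eq_bigr => i _.
  have e : split (lshift k2 i) = inl i := unsplitK (inl _ i).
  by rewrite e scalerA.
have e : split (rshift k1 i) = inr i := unsplitK (inr _ i).
by rewrite e.
Qed.

Lemma sub_sum (P : V -> Prop) k (c : 'I_k -> R) (w : 'I_k -> V) :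
  P 0 -> (forall a x y, P x -> P y -> P (a *: x + y)) -> (forall i, P (w i)) ->
  P (\sum_(i < k) c i *: w i).
Proof.
move=> P0 Pl Pw; elim: k c w Pw => [|k IH] c w Pw; first by rewrite big_ord0.
rewrite big_ord_recr /= addrC; apply: Pl => //.
exact: (IH (fun i => c (widen_ord (leqnSn k) i)) (fun i => w (widen_ord (leqnSn k) i))).
Qed.

Lemma lspan_sum (S : V -> Prop) k (c : 'I_k -> R) (w : 'I_k -> V) :
  (forall i, lspan S (w i)) -> lspan S (\sum_(i < k) c i *: w i).
Proof. by move=> H; apply: sub_sum => //; [apply: lspan0|move=> *; apply: lspan_lin]. Qed.
End Span.
Section Lie.
Variable R : realType.
Variable n : nat.
Local Notation L := 'rV[R]_n.
Variable br : L -> L -> L.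
Hypothesis Hbr : is_lie_bracket br.

Lemma brl a x y z : br (a *: x + y) z = a *: br x z + br y z.
Proof. by case: Hbr. Qed.
Lemma brr a x y z : br z (a *: x + y) = a *: br z x + br z y.
Proof. by case: Hbr. Qed.
Lemma brxx x : br x x = 0.
Proof. by case: Hbr. Qed.
Lemma jac x y z : br x (br y z) + br y (br z x) + br z (br x y) = 0.
Proof. by case: Hbr. Qed.

Lemma br0l z : br 0 z = 0.
Proof.
have := brl 1 0 0 z; rewrite scaler0 addr0 scale1r => H.
by apply: (addrI (br 0 z)); rewrite addr0 -H.
Qed.
Lemma br0r z : br z 0 = 0.
Proof.
have := brr 1 0 0 z; rewrite scaler0 addr0 scale1r => H.
by apply: (addrI (br z 0)); rewrite addr0 -H.
Qed.
Lemma brDl x y z : br (x + y) z = br x z + br y z.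
Proof. by rewrite -[x]scale1r brl !scale1r. Qed.
Lemma brDr x y z : br z (x + y) = br z x + br z y.
Proof. by rewrite -[x]scale1r brr !scale1r. Qed.
Lemma brZl a x z : br (a *: x) z = a *: br x z.
Proof. by rewrite -[a *: x]addr0 brl br0l addr0. Qed.
Lemma brZr a x z : br z (a *: x) = a *: br z x.
Proof. by rewrite -[a *: x]addr0 brr br0r addr0. Qed.
Lemma brNl x z : br (- x) z = - br x z.
Proof. by rewrite -scaleN1r brZl scaleN1r. Qed.
Lemma brNr x z : br z (- x) = - br z x.
Proof. by rewrite -scaleN1r brZr scaleN1r. Qed.
Lemma brBl x y z : br (x - y) z = br x z - br y z.
Proof. by rewrite brDl brNl. Qed.
Lemma brBr x y z : br z (x - y) = br z x - br z y.
Proof. by rewrite brDr brNr. Qed.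
Lemma brA x y : br x y = - br y x.
Proof.
have := brxx (x + y); rewrite brDl !brDr !brxx add0r addr0 => /eqP.
by rewrite addr_eq0 => /eqP.
Qed.

Lemma brsum_l k (c : 'I_k -> R) (w : 'I_k -> L) z :
  br (\sum_(i < k) c i *: w i) z = \sum_(i < k) c i *: br (w i) z.
Proof.
elim: k c w => [|k IH] c w; first by rewrite !big_ord0 br0l.
by rewrite !big_ord_recr /= brDl brZl IH.
Qed.
Lemma brsum_r k (c : 'I_k -> R) (w : 'I_k -> L) z :
  br z (\sum_(i < k) c i *: w i) = \sum_(i < k) c i *: br z (w i).
Proof.
elim: k c w => [|k IH] c w; first by rewrite !big_ord0 br0r.
by rewrite !big_ord_recr /= brDr brZr IH.
Qed.

Lemma adE x v : v *m ad_mx br x = br x v.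
Proof.
rewrite {2}(row_sum_delta v) brsum_r; apply/rowP => j.
rewrite !mxE summxE; apply: eq_bigr => i _.
by rewrite !mxE.
Qed.

Lemma ad_inj (M N : 'M[R]_n) : (forall v : L, v *m M = v *m N) -> M = N.
Proof. by move=> H; apply/row_matrixP => i; rewrite !rowE H. Qed.

Lemma adl a x y : ad_mx br (a *: x + y) = a *: ad_mx br x + ad_mx br y.
Proof. by apply: ad_inj => v; rewrite mulmxDr -scalemxAr !adE brl. Qed.

Lemma ad_br x y : ad_mx br (br x y) = ad_mx br y *m ad_mx br x - ad_mx br x *m ad_mx br y.
Proof.
apply: ad_inj => v; rewrite mulmxBr !mulmxA !adE.
rewrite (brA (br x y)) (brA x v) brNr opprK.
by apply/eqP; rewrite eqr_oppLR -addr_eq0 addrA jac.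
Qed.

Notation K := (killing br).

Lemma K_sym x y : K x y = K y x.
Proof. exact: mxtrace_mulC. Qed.

Lemma K_l a x y z : K (a *: x + y) z = a * K x z + K y z.
Proof. by rewrite /killing adl mulmxDl -scalemxAl mxtraceD mxtraceZ. Qed.

Lemma K_r a x y z : K z (a *: x + y) = a * K z x + K z y.
Proof. by rewrite K_sym K_l !(K_sym z). Qed.

Lemma K_inv x y z : K (br x y) z = K x (br y z).
Proof.
rewrite /killing !ad_br mulmxBl mulmxBr !linearB /=; congr (_ - _).
  by rewrite -mulmxA mxtrace_mulC mulmxA.
by rewrite mulmxA.
Qed.

Variable Th : 'M[R]_n.
Hypothesis HTh : cartan_involution br Th.

Lemma ThTh : Th *m Th = 1%:M.
Proof. by case: HTh. Qed.
Lemma Thhom x y : br (x *m Th) (y *m Th) = br x y *m Th.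
Proof. by case: HTh. Qed.
Lemma Thpos x : x != 0 -> 0 < - K x (x *m Th).
Proof. by case: HTh => _ _; apply. Qed.
Lemma ThK m (x : 'M[R]_(m, n)) : x *m Th *m Th = x.
Proof. by rewrite -mulmxA ThTh mulmx1. Qed.

Lemma adTh x : ad_mx br (x *m Th) = Th *m ad_mx br x *m Th.
Proof.
apply: ad_inj => v; rewrite !mulmxA adE adE -Thhom ThK.
by [].
Qed.

Lemma K_Th x y : K (x *m Th) (y *m Th) = K x y.
Proof.
rewrite /killing !adTh !mulmxA -(mulmxA _ Th Th) ThTh mulmx1 -!mulmxA mxtrace_mulC.
by rewrite !mulmxA ThK.
Qed.

Definition Bt x y := - K x (y *m Th).

Lemma Bt_sym x y : Bt x y = Bt y x.
Proof. by rewrite /Bt -K_Th ThK K_sym. Qed.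

Lemma Bt_l a x y z : Bt (a *: x + y) z = a * Bt x z + Bt y z.
Proof. by rewrite /Bt K_l opprD mulrN. Qed.

Lemma Bt_pos x : x != 0 -> 0 < Bt x x.
Proof. exact: Thpos. Qed.

Lemma brTh h x : h *m Th = - h -> br h (x *m Th) = - (br h x *m Th).
Proof.
by move=> hTh; rewrite -Thhom hTh brNl opprK.
Qed.

Lemma K_Nl x z : K (- x) z = - K x z.
Proof.
have K0 : K 0 z = 0 by have := K_l 1 0 0 z; rewrite scaler0 addr0 mul1r => H; lra.
by rewrite -scaleN1r -[_ *: x]addr0 K_l K0 addr0 mulN1r.
Qed.

Lemma Bt_ad h x y : h *m Th = - h -> Bt (br h x) y = Bt x (br h y).
Proof.
move=> hTh; rewrite /Bt brA K_Nl K_inv brTh // K_sym K_Nl K_sym opprK; reflexivity.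
Qed.


Variable A : L -> Prop.
Hypothesis HA : max_abelian_in_p br Th A.

Lemma A0 : A 0.
Proof. by case: HA => -[]. Qed.
Lemma A_lin a x y : A x -> A y -> A (a *: x + y).
Proof. by case: HA => -[_ H] *; apply: H. Qed.
Lemma A_p h : A h -> h *m Th = - h.
Proof. by case: HA => _ H _ _; apply: H. Qed.
Lemma A_ab h h' : A h -> A h' -> br h h' = 0.
Proof. by case: HA => _ _ H _; apply: H. Qed.

Lemma maxA z : z *m Th = - z -> (forall h, A h -> br h z = 0) -> A z.
Proof.
move=> zTh zc; case: HA => sA pA abA mA.
pose A' := fun w => exists h t, A h /\ w = h + t *: z.
apply: (mA A'); last by exists 0, 1; rewrite scale1r add0r; split => //; exact: A0.
- split; first by exists 0, 0; rewrite scale0r addr0; split => //; exact: A0.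
  move=> a x y [h1 [t1 [Ah1 ->]]] [h2 [t2 [Ah2 ->]]].
  exists (a *: h1 + h2), (a * t1 + t2); split; first exact: A_lin.
  by rewrite scalerDl scalerDr -scalerA addrACA.
- move=> x [h [t [Ah ->]]].
  by rewrite /pspace mulmxDl -scalemxAl zTh (A_p Ah) scalerN opprD.
- move=> x y [h1 [t1 [Ah1 ->]]] [h2 [t2 [Ah2 ->]]].
  rewrite brDl !brDr !brZl !brZr (A_ab Ah1 Ah2) (zc _ Ah1) brxx (brA z) (zc _ Ah2).
  by rewrite oppr0 !scaler0 !addr0.
- by move=> x Ax; exists x, 0; rewrite scale0r addr0.
Qed.

Lemma fvalN (lam : 'cV[R]_n) h : fval (- lam) h = - fval lam h.
Proof. by rewrite /fval mulmxN mxE. Qed.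

Lemma rootTh lam x : root_vec br A lam x -> root_vec br A (- lam) (x *m Th).
Proof.
move=> rx h Ah; rewrite (brTh x (A_p Ah)) rx // fvalN -scalemxAl scaleNr.
by [].
Qed.

Lemma brexA lam x : root_vec br A lam x -> A (br (x *m Th) x).
Proof.
move=> rx; apply: maxA.
  by rewrite -Thhom ThK brA.
move=> h Ah.
have := jac h (x *m Th) x.
rewrite (brA x h) brNr (rx _ Ah) brZr (brA (x *m Th)) (rootTh rx Ah) brZr fvalN.
by rewrite scalerN opprK scaleNr addrK.
Qed.

Lemma K0l z : K 0 z = 0.
Proof. by have := K_l 1 0 0 z; rewrite scaler0 addr0 mul1r => H; lra. Qed.
Lemma K_Z a x z : K (a *: x) z = a * K x z.
Proof. by rewrite -[a *: x]addr0 K_l K0l addr0. Qed.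

Lemma Knz lam x h0 : x != 0 -> root_vec br A lam x -> A h0 -> fval lam h0 != 0 ->
  fval lam (br (x *m Th) x) != 0.
Proof.
move=> x0 rx Ah0 l0.
have Ah : A (br (x *m Th) x) := brexA rx.
set e := x *m Th in Ah *; set h := br e x in Ah *.
have kap : K e x != 0.
  by rewrite K_sym; have := Thpos x0; rewrite -/e => H; apply/eqP => E; move: H; rewrite E; lra.
have KhA h' : A h' -> K h' h = - (fval lam h' * K e x).
  move=> Ah'; rewrite /h -K_inv (rootTh rx Ah') K_Z fvalN mulNr.
  by [].
apply/eqP => mh.
have Khh : K h h = 0 by rewrite KhA // mh mul0r oppr0.
have h0' : h = 0.
  apply/eqP; apply: contraT => hn; have := Thpos hn; rewrite (A_p Ah) K_sym K_Nl Khh.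
  by rewrite !oppr0 ltxx.
move: (KhA _ Ah0); rewrite h0' K_sym K0l => /eqP; rewrite eq_sym oppr_eq0 mulf_eq0.
by rewrite (negPf l0) (negPf kap).
Qed.

Lemma mk_lam x : x != 0 -> (forall h, A h -> exists mu, br h x = mu *: x) ->
  exists lam, root_vec br A lam x.
Proof.
move=> x0 jx.
have [k xk] : exists k, x 0 k != 0.
  have [k Hk|H] := pickP (fun k => x 0 k != 0); first by exists k.
  by case/negP: x0; apply/eqP/rowP => k; rewrite mxE; apply/eqP/negbFE/H.
pose lam := \col_i ((br (delta_mx 0 i) x) 0 k / x 0 k).
exists lam => h Ah.
have [mu Hmu] := jx h Ah.
have e1 : (br h x) 0 k = \sum_i h 0 i * (br (delta_mx 0 i) x) 0 k.
  by rewrite {1}(row_sum_delta h) brsum_l summxE; apply: eq_bigr => i _; rewrite mxE.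
suff -> : fval lam h = mu by [].
rewrite /fval mxE; under eq_bigr do rewrite mxE mulrA.
by rewrite -mulr_suml -e1 Hmu mxE mulfK.
Qed.

Lemma basis_aux d k (M : 'M[R]_(k, n)) : (n - \rank M <= d)%N -> (forall i, A (row i M)) ->
  exists k' (M' : 'M[R]_(k', n)), (forall i, A (row i M')) /\ (forall h, A h -> (h <= M')%MS).
Proof.
elim: d k M => [|d IH] k M dM rM.
  exists k, M; split => // h _; apply: submx_full.
  by rewrite /row_full eqn_leq rank_leq_col; lia.
case: (classic (forall h, A h -> (h <= M)%MS)) => [H|H]; first by exists k, M.
have [h [Ah hM]] : exists h, A h /\ ~~ (h <= M)%MS.
  apply: NNPP => nE; apply: H => h Ah; case E: (h <= M)%MS => //.
  by exfalso; apply: nE; exists h; rewrite E.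
have sub : (M <= col_mx M h)%MS by rewrite -addsmxE addsmxSl.
have hsub : (h <= col_mx M h)%MS by rewrite -addsmxE addsmxSr.
have nsub : ~~ (col_mx M h <= M)%MS.
  by apply: contra hM => /(submx_trans hsub).
have lt : (\rank M < \rank (col_mx M h))%N by rewrite (ltn_leqif (mxrank_leqif_sup sub)) nsub.
have rc := rank_leq_col (col_mx M h).
apply: (IH _ (col_mx M h)) => [|i]; first by lia.
rewrite -(splitK i); case: (split i) => j /=; first by rewrite rowKu.
by rewrite rowKd row_id.
Qed.

Lemma basisA : exists k (M : 'M[R]_(k, n)), (forall i, A (row i M)) /\ (forall h, A h -> (h <= M)%MS).
Proof. by apply: (@basis_aux n 0 0); [rewrite leq_subr|case]. Qed.


Lemma ad0 : ad_mx br 0 = 0.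
Proof. by apply: ad_inj => v; rewrite adE br0l mulmx0. Qed.

Lemma joint : exists P : 'M[R]_n, P \in unitmx /\
  forall j h, A h -> exists mu, br h (row j P) = mu *: row j P.
Proof.
have [k [M [rM sA]]] := basisA.
pose fs := [seq ad_mx br (row i M) | i <- enum 'I_k].
have cd : codiagonalizable fs.
  apply/codiagonalizableP; split.
    move=> f g /mapP[i _ ->] /mapP[j _ ->]; rewrite /comm_mx.
    have := ad_br (row i M) (row j M); rewrite A_ab // ad0 => /eqP.
    by rewrite eq_sym subr_eq0 => /eqP ->.
  move=> f /mapP[i _ ->]; apply: (@sym_diag_gen _ _ _ Bt).
  - exact: Bt_l.
  - exact: Bt_sym.
  - exact: Bt_pos.
  - by move=> x y; rewrite !adE; apply: Bt_ad; apply: A_p.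
have [P Pu Pd] := cd.
exists P; split => // j h Ah.
have ev i : exists mu, br (row i M) (row j P) = mu *: row j P.
  have /similar_diagPex[D /(similarP Pu) E] : similar_diag P (ad_mx br (row i M)).
    by move/allP: Pd; apply; apply: map_f; rewrite mem_enum.
  exists (D 0 j).
  have := congr1 (row j) E; rewrite row_mul adE mul_diag_mx => ->.
  by apply/rowP => l; rewrite !mxE.
have [c ->] := submxP (sA h Ah).
rewrite mulmx_sum_row brsum_l.
apply: (@sub_sum _ _ (fun v => exists mu, v = mu *: row j P)).
- by exists 0; rewrite scale0r.
- by move=> a x y [mx ->] [my ->]; exists (a * mx + my); rewrite scalerDl scalerA.
- by move=> i; have [mu ->] := ev i; exists mu.
Qed.


Variable H0 : L.
Hypothesis HH0 : regular_elt br A H0.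
Variable m : nat.
Variable pi : L -> 'M[R]_m.
Hypothesis Hpi : is_lie_rep br pi.

Lemma pil a x y : pi (a *: x + y) = a *: pi x + pi y.
Proof. by case: Hpi. Qed.
Lemma pibr x y : pi (br x y) = pi x *m pi y - pi y *m pi x.
Proof. by case: Hpi. Qed.
Lemma pi0 : pi 0 = 0.
Proof.
have := pil 1 0 0; rewrite scaler0 addr0 scale1r => H.
by apply: (addrI (pi 0)); rewrite addr0 -H.
Qed.
Lemma piZ a x : pi (a *: x) = a *: pi x.
Proof. by rewrite -[a *: x]addr0 pil pi0 addr0. Qed.
Lemma piD x y : pi (x + y) = pi x + pi y.
Proof. by rewrite -[x]scale1r pil !scale1r. Qed.
Lemma pisum k (c : 'I_k -> R) (w : 'I_k -> L) :
  pi (\sum_(i < k) c i *: w i) = \sum_(i < k) c i *: pi (w i).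
Proof.
elim: k c w => [|k IH] c w; first by rewrite !big_ord0 pi0.
by rewrite !big_ord_recr /= piD piZ IH.
Qed.

Let ams := ams_plus br Th A H0.
Let Sams := fun w : 'cV[R]_m => exists X v, ams X /\ w = pi X *m v.
Let W := lspan Sams.

Lemma W_ams X v : ams X -> W (pi X *m v).
Proof. by move=> aX; apply: lspan_in; exists X, v. Qed.

Lemma mspace0 : mspace br Th A 0.
Proof. by split; [rewrite mul0mx | move=> h _; rewrite br0r]. Qed.

Lemma ams_A h : A h -> ams h.
Proof. by move=> Ah; exists h, 0, 0; split => //; [exact: mspace0|exact: lspan0|rewrite !addr0]. Qed.

Lemma ams_sp x : s_plus br A H0 x -> ams x.
Proof. by move=> sx; exists 0, 0, x; split => //; [exact: A0|exact: mspace0|rewrite !add0r]. Qed.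

Lemma classify x lam : x != 0 -> root_vec br A lam x -> forall v, W (pi x *m v).
Proof.
move=> x0 rx v.
have AH0 : A H0 by case: HH0.
case: (classic (exists h, A h /\ fval lam h != 0)) => [[h1 [Ah1 l1]]|N].
  have isr : is_root br A lam by split; [exists h1 | exists x].
  have lH0 : fval lam H0 != 0 by case: HH0 => _ /(_ _ isr).
  case: (ltrgtP 0 (fval lam H0)) => [pos|neg|e]; last by rewrite -e eqxx in lH0.
    by apply: W_ams; apply: ams_sp; apply: lspan_in; exists lam; split.
  set e := x *m Th.
  have re : root_vec br A (- lam) e := rootTh rx.
  have e0 : e != 0.
    by apply: contra x0 => /eqP e0; rewrite -(ThK x) -/e e0 mul0mx.
  have isre : is_root br A (- lam).
    by split; [exists h1; rewrite fvalN oppr_eq0 | exists e].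
  have se : ams e.
    by apply: ams_sp; apply: lspan_in; exists (- lam); split; rewrite // fvalN oppr_gt0.
  have Ah : A (br e x) := brexA rx.
  have hn := Knz x0 rx AH0 lH0.
  apply: (@sl2_gen R m (pi e) (pi x) (pi (br e x)) (fval lam (br e x)) W hn).
  - by rewrite pibr.
  - by rewrite -pibr rx // piZ.
  - exact: lspan0.
  - by move=> *; apply: lspan_lin.
  - by move=> u; apply: W_ams.
  - by move=> u; apply: W_ams; apply: ams_A.
have z0 h : A h -> br h x = 0.
  move=> Ah; rewrite rx //.
  have -> : fval lam h = 0 by apply/eqP; apply: NNPP => nz; apply: N; exists h; split => //; apply/negP.
  by rewrite scale0r.
pose y := (2^-1 : R) *: (x + x *m Th).
pose z := (2^-1 : R) *: (x - x *m Th).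
have Az : A z.
  apply: maxA.
    by rewrite /z -scalemxAl mulmxBl ThK -scalerN opprB.
  move=> h Ah; rewrite /z brZr brBr (brTh x (A_p Ah)) z0 // mul0mx.
  by rewrite oppr0 subr0 scaler0.
have My : mspace br Th A y.
  split; first by rewrite /y -scalemxAl mulmxDl ThK addrC.
  move=> h Ah; rewrite /y brZr brDr (brTh x (A_p Ah)) z0 // mul0mx.
  by rewrite oppr0 addr0 scaler0.
apply: W_ams; exists z, y, 0; split => //; first exact: lspan0.
rewrite addr0 /y /z -scalerDr addrACA addNr addr0 -mulr2n -scaler_nat scalerA mulVf ?scale1r //.
by rewrite pnatr_eq0.
Qed.

Lemma keyW X v : W (pi X *m v).
Proof.
have [P [Pu jP]] := joint.
have -> : X = \sum_j (X *m invmx P) 0 j *: row j P.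
  by rewrite -mulmx_sum_row mulmxKV.
rewrite pisum mulmx_suml.
under eq_bigr do rewrite -scalemxAl.
apply: sub_sum => //; [exact: lspan0|by move=> *; apply: lspan_lin|].
move=> j; have [->|x0] := eqVneq (row j P) 0.
  by rewrite pi0 mul0mx; apply: lspan0.
have [lam rl] := mk_lam x0 (jP j).
exact: classify rl v.
Qed.

End Lie.

Unset Implicit Arguments.

Theorem lemma2p7 (R : realType) (n : nat) (br : 'rV[R]_n -> 'rV[R]_n -> 'rV[R]_n)
  (Th : 'M[R]_n) (A : 'rV[R]_n -> Prop) (H0 : 'rV[R]_n)
  (m : nat) (pi : 'rV[R]_n -> 'M[R]_m) :
  is_lie_bracket br -> semisimple br -> no_compact_ideals br ->
  cartan_involution br Th -> max_abelian_in_p br Th A ->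
  regular_elt br A H0 -> is_lie_rep br pi ->
  forall u : 'cV[R]_m,
    lspan (fun w : 'cV[R]_m => exists X v, w = pi X *m v) u <->
    lspan (fun w : 'cV[R]_m => exists X v, ams_plus br Th A H0 X /\ w = pi X *m v) u.
Proof.
move=> Hbr _ _ HTh HA HH0 Hpi u; split.
  move=> [k [c [w [Sw ->]]]].
  apply: lspan_sum => i; have [X [v ->]] := Sw i.
  exact: (keyW Hbr HTh HA HH0 Hpi).
move=> [k [c [w [Sw ->]]]]; exists k, c, w; split => // i.
by have [X [v [_ ->]]] := Sw i; exists X, v.
Qed.
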